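(* Let $\mathcal{A}=M_2(\mathbb{F})$ be endowed with an involution $*$ of the first kind and let $f$ be a multilinear $*$-polynomial. Let $\mathcal{S}$, $\mathcal{K}$, $\mathcal{Z}$ denote the sets of symmetric, skew-symmetric and central (scalar) elements of $\mathcal{A}$. Suppose one of the following holds: (1) $*$ is the transpose involution and $\mathbb{F}=\mathbb{R}$; (2) $*$ is the symplectic involution $\begin{pmatrix}a&b\\c&d\end{pmatrix}^*=\begin{pmatrix}d&-b\\-c&a\end{pmatrix}$ and $\mathbb{F}$ is an arbitrary field. Then the linear span of the image $f(\mathcal{A})$ is one of the subspaces \[ 0,\ \mathcal{Z},\ \mathcal{K},\ [\mathcal{S},\mathcal{K}],\ \mathcal{S},\ \mathcal{Z}+\mathcal{K},\ [\mathcal{A},\mathcal{A}],\ \mathcal{A}. \]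
   Context: An involution of the first kind on an $\mathbb{F}$-algebra $\mathcal{A}$ is an $\mathbb{F}$-linear map $*$ with $(a^* )^*=a$ and $(ab)^*=b^*a^*$. For subsets $U,V\subseteq\mathcal{A}$, $[U,V]$ denotes the linear span of all commutators $[u,v]=uv-vu$ with $u\in U$, $v\in V$. A $*$-polynomial is an element of the free algebra $\mathbb{F}\langle Y;Z\rangle$ on symmetric variables $y_i$ ($y_i^*=y_i$) and skew-symmetric variables $z_j$ ($z_j^*=-z_j$); its image $f(\mathcal{A})$ is the set of its values when symmetric elements of $\mathcal{A}$ are substituted for the $y_i$ and skew-symmetric elements for the $z_j$. It is multilinear if each variable occurs exactly once in every monomial. *)

(* Defs.v *)
From HB Require Import structures.
From mathcomp Require Import all_boot all_order all_algebra all_fingroup.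
From mathcomp Require Export reals.
Set Implicit Arguments. Unset Strict Implicit. Unset Printing Implicit Defensive.
Import Order.TTheory GRing.Theory Num.Theory.
Local Open Scope ring_scope.

Section StarDefs.
Variable F : fieldType.
Local Notation M := ('M[F]_2).

(* the symplectic involution [[a,b],[c,d]]^* = [[d,-b],[-c,a]] *)
Definition symp (A : M) : M :=
  \matrix_(i < 2, j < 2) (if i == j then A (rev_ord i) (rev_ord j) else - A i j).

Definition is_sym (inv : M -> M) (x : M) : Prop := inv x = x.
Definition is_skew (inv : M -> M) (x : M) : Prop := inv x = - x.
Definition is_central (x : M) : Prop := exists a : F, x = a%:M.

Definition lspan (P : M -> Prop) (x : M) : Prop :=
  exists (n : nat) (c : 'I_n -> F) (v : 'I_n -> M),
    (forall i, P (v i)) /\ x = \sum_(i < n) c i *: v i.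

Definition comm_span (U V : M -> Prop) : M -> Prop :=
  lspan (fun x => exists u v, U u /\ V v /\ x = u * v - v * u).

(* A multilinear *-polynomial in k variables x_0..x_(k-1):
   kind i = true means x_i is a symmetric variable y, false a skew one z;
   f = \sum_{s in S_k} c s x_{s 0} x_{s 1} ... x_{s (k-1)}. *)
Definition mpoly_eval (k : nat) (c : {perm 'I_k} -> F) (a : 'I_k -> M) : M :=
  \sum_(s : {perm 'I_k}) c s *: \prod_(i < k) a (s i).

Definition star_image (inv : M -> M) (k : nat) (kind : 'I_k -> bool)
    (c : {perm 'I_k} -> F) (x : M) : Prop :=
  exists a : 'I_k -> M,
    (forall i, if kind i then is_sym inv (a i) else is_skew inv (a i)) /\
    x = mpoly_eval c a.

Definition same_set (P Q : M -> Prop) : Prop := forall x, P x <-> Q x.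

Definition span_in_list (inv : M -> M) (P : M -> Prop) : Prop :=
     same_set P (fun x => x = 0)
  \/ same_set P is_central
  \/ same_set P (is_skew inv)
  \/ same_set P (comm_span (is_sym inv) (is_skew inv))
  \/ same_set P (is_sym inv)
  \/ same_set P (fun x => exists z w, is_central z /\ is_skew inv w /\ x = z + w)
  \/ same_set P (comm_span (fun _ => True) (fun _ => True))
  \/ same_set P (fun _ => True).

End StarDefs.

(* Main.v *)
Require Import Defs.
From HB Require Import structures.
From mathcomp Require Import all_boot all_order all_algebra all_fingroup.
From mathcomp Require Import reals.
From mathcomp Require Import ring lra.
Import Order.TTheory GRing.Theory Num.Theory.
Local Open Scope ring_scope.
Set Implicit Arguments. Unset Strict Implicit.
Section Coord.
Variable F : comRingType.
Local Notation M := 'M[F]_2.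
Definition i0 : 'I_2 := ord0.
Definition i1 : 'I_2 := ord_max.
Definition mk (a b c d : F) : M :=
  \matrix_(i < 2, j < 2) if i == i0 then (if j == i0 then a else b) else (if j == i0 then c else d).
Lemma ord2 (i : 'I_2) : i = i0 \/ i = i1.
Proof. case: i => [[|[|m]] Hm]; [left|right|done]; exact: val_inj. Qed.
Lemma mkE (x : M) : x = mk (x i0 i0) (x i0 i1) (x i1 i0) (x i1 i1).
Proof. apply/matrixP => i j; rewrite mxE; by case: (ord2 i) => ->; case: (ord2 j) => ->. Qed.
Lemma mk_mul a b c d e f g h : mk a b c d * mk e f g h = mk (a*e+b*g) (a*f+b*h) (c*e+d*g) (c*f+d*h).
Proof.
apply/matrixP => i j; rewrite -mulmxE !mxE !big_ord_recl big_ord0 !mxE addr0.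
by case: (ord2 i) => ->; case: (ord2 j) => ->.
Qed.
Lemma mk_add a b c d e f g h : mk a b c d + mk e f g h = mk (a+e) (b+f) (c+g) (d+h).
Proof. apply/matrixP => i j; rewrite !mxE; by case: (ord2 i) => ->; case: (ord2 j) => ->. Qed.
Lemma mk_opp a b c d : - mk a b c d = mk (-a) (-b) (-c) (-d).
Proof. apply/matrixP => i j; rewrite !mxE; by case: (ord2 i) => ->; case: (ord2 j) => ->. Qed.
Lemma mk_scale k a b c d : k *: mk a b c d = mk (k*a) (k*b) (k*c) (k*d).
Proof. apply/matrixP => i j; rewrite !mxE; by case: (ord2 i) => ->; case: (ord2 j) => ->. Qed.
Lemma mk_scalar a : a%:M = mk a 0 0 a :> M.
Proof. apply/matrixP => i j; rewrite !mxE; by case: (ord2 i) => ->; case: (ord2 j) => ->. Qed.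
Lemma mk_one : 1 = mk 1 0 0 1 :> M.
Proof. by rewrite -mk_scalar. Qed.
Lemma mk_zero : 0 = mk 0 0 0 0 :> M.
Proof. apply/matrixP => i j; rewrite !mxE; by case: (ord2 i) => ->; case: (ord2 j) => ->. Qed.
Lemma mk_tr a b c d : (mk a b c d)^T = mk a c b d.
Proof. apply/matrixP => i j; rewrite !mxE; by case: (ord2 i) => ->; case: (ord2 j) => ->. Qed.
Lemma mk_sub a b c d e f g h : mk a b c d - mk e f g h = mk (a-e) (b-f) (c-g) (d-h).
Proof. by rewrite mk_opp mk_add. Qed.
Lemma mk_inj a b c d e f g h : mk a b c d = mk e f g h -> [/\ a = e, b = f, c = g & d = h].
Proof.
move=> H. have E := congr1 (fun x : M => (x i0 i0, x i0 i1, x i1 i0, x i1 i1)) H.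
by move: E; rewrite /= !mxE /=; case=> -> -> -> ->.
Qed.
End Coord.
Lemma mk_symp (F : fieldType) (a b c d : F) : symp (mk a b c d) = mk d (-b) (-c) a.
Proof. apply/matrixP => i j; rewrite !mxE; case: (ord2 i) => ->; case: (ord2 j) => ->; rewrite /= ?mxE //=. Qed.
Section Span.
Variable F : fieldType.
Local Notation M := 'M[F]_2.
Implicit Types P Q : M -> Prop.

Lemma lspan0 P : lspan P 0.
Proof. exists 0%N, (fun _ => 0), (fun _ => 0); split => [[]//|]; by rewrite big_ord0. Qed.

Lemma lspan1 P x : P x -> lspan P x.
Proof. move=> Px; exists 1%N, (fun _ => 1), (fun _ => x); split => //. by rewrite big_ord1 scale1r. Qed.

Lemma lspanZ P a x : lspan P x -> lspan P (a *: x).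
Proof.
move=> [n [c [v [Pv ->]]]]; exists n, (fun i => a * c i), v; split => //.
by rewrite scaler_sumr; apply: eq_bigr => i _; rewrite scalerA.
Qed.

Lemma lspanD P x y : lspan P x -> lspan P y -> lspan P (x + y).
Proof.
move=> [n [c [v [Pv ->]]]] [m [d [w [Pw ->]]]].
exists (n + m)%N, (fun i => match split i with inl j => c j | inr j => d j end),
  (fun i => match split i with inl j => v j | inr j => w j end).
split; first by move=> i; case: (split i).
rewrite big_split_ord /=; congr (_ + _); apply: eq_bigr => i _.
  by rewrite (unsplitK (inl i)).
by rewrite (unsplitK (inr i)).
Qed.

Lemma lspan_ind P (Q : M -> Prop) x : Q 0 -> (forall x y, Q x -> Q y -> Q (x + y)) ->
  (forall a x, Q x -> Q (a *: x)) -> (forall x, P x -> Q x) -> lspan P x -> Q x.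
Proof.
move=> Q0 QD QZ PQ [n [c [v [Pv ->]]]].
apply: (big_ind Q) => // i _; apply: QZ; exact: PQ.
Qed.

Lemma lspan_map P (phi : M -> M) x :
  (forall x y, phi (x + y) = phi x + phi y) -> (forall a x, phi (a *: x) = a *: phi x) ->
  (forall y, P y -> lspan P (phi y)) -> lspan P x -> lspan P (phi x).
Proof.
move=> pD pZ pP; apply: (@lspan_ind P (fun x => lspan P (phi x))).
- by rewrite -(scale0r (0 : M)) pZ scale0r; apply: lspan0.
- by move=> y z Hy Hz; rewrite pD; apply: lspanD.
- by move=> a y Hy; rewrite pZ; apply: lspanZ.
- exact: pP.
Qed.

Lemma lspan_conj P g h x : (forall y, P y -> lspan P (g * y * h)) -> lspan P x -> lspan P (g * x * h).
Proof.
move=> H; apply: (@lspan_map P (fun x => g * x * h) x) => //.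
  by move=> y z; rewrite mulrDr mulrDl.
by move=> a y; rewrite -scalerAr -scalerAl.
Qed.

Lemma lspan_der P u x : (forall y, P y -> lspan P (u * y - y * u)) -> lspan P x -> lspan P (u * x - x * u).
Proof.
move=> H; apply: (@lspan_map P (fun x => u * x - x * u) x) => //.
  by move=> y z; rewrite mulrDr mulrDl opprD addrACA.
by move=> a y; rewrite -scalerAr -scalerAl scalerBr.
Qed.

Lemma lspan_sub P Q x : Q 0 -> (forall x y, Q x -> Q y -> Q (x + y)) ->
  (forall a x, Q x -> Q (a *: x)) -> (forall x, P x -> Q x) -> lspan P x -> Q x.
Proof. exact: lspan_ind. Qed.

Lemma prod_conj n g h (b : 'I_n -> M) : h * g = 1 -> g * h = 1 ->
  \prod_(i < n) (g * b i * h) = g * (\prod_(i < n) b i) * h.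
Proof.
move=> hg gh; elim: n b => [|n IH] b; first by rewrite !big_ord0 mulr1 gh.
rewrite !big_ord_recl IH !mulrA -[g * b ord0 * h * g]mulrA hg mulr1 //.
Qed.

Lemma comm_prod n u (b : 'I_n -> M) :
  u * (\prod_(i < n) b i) - (\prod_(i < n) b i) * u =
  \sum_(j < n) \prod_(i < n) (if i == j then u * b i - b i * u else b i).
Proof.
elim: n b => [|n IH] b; first by rewrite !big_ord0 mulr1 mul1r subrr.
have E0 : \prod_(i < n.+1) (if i == ord0 then u * b i - b i * u else b i) =
    (u * b ord0 - b ord0 * u) * \prod_(i < n) b (lift ord0 i).
  rewrite big_ord_recl eqxx; congr (_ * _); try (apply: eq_bigr => i _;
  by rewrite eq_sym (negbTE (neq_lift _ _))).
have E1 : forall j, \prod_(i < n.+1) (if i == lift ord0 j then u * b i - b i * u else b i) =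
    b ord0 * \prod_(i < n) (if i == j then u * b (lift ord0 i) - b (lift ord0 i) * u
                              else b (lift ord0 i)).
  move=> j; rewrite big_ord_recl ?(negbTE (neq_lift _ _)); congr (_ * _); try (apply: eq_bigr => i _;
  by rewrite (inj_eq (@lift_inj _ ord0))).
rewrite [in RHS]big_ord_recl E0.
rewrite (eq_bigr _ (fun j _ => E1 j)).
rewrite -mulr_sumr -(IH (fun i => b (lift ord0 i))).
rewrite big_ord_recl mulrBl mulrBr !mulrA addrA subrK //.
Qed.
End Span.
Section Img.
Variable F : fieldType.
Local Notation M := 'M[F]_2.
Variable inv : M -> M.
Variables (k : nat) (kind : 'I_k -> bool) (c : {perm 'I_k} -> F).
Local Notation V := (lspan (star_image inv kind c)).

Lemma V_conj g h x : h * g = 1 -> g * h = 1 ->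
  (forall y, inv (g * y * h) = g * inv y * h) -> V x -> V (g * x * h).
Proof.
move=> hg gh Hi; apply: lspan_conj => _ [a [Ha ->]]; apply: lspan1.
exists (fun i => g * a i * h); split.
  move=> i; move: (Ha i); case: (kind i); rewrite /Defs.is_sym /Defs.is_skew Hi => ->//.
  by rewrite mulrN mulNr.
rewrite /mpoly_eval mulr_sumr mulr_suml; apply: eq_bigr => s _.
by rewrite -scalerAr -scalerAl (prod_conj (fun i => a (s i)) hg gh).
Qed.

Lemma V_der u x :
  (forall y, inv y = y -> inv (u * y - y * u) = u * y - y * u) ->
  (forall y, inv y = - y -> inv (u * y - y * u) = - (u * y - y * u)) ->
  V x -> V (u * x - x * u).
Proof.
move=> Hs Hk; apply: lspan_der => _ [a [Ha ->]].
pose a' (m : 'I_k) := fun i => if i == m then u * a i - a i * u else a i.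
have -> : u * mpoly_eval c a - mpoly_eval c a * u = \sum_(m < k) mpoly_eval c (a' m).
  rewrite /mpoly_eval exchange_big /= mulr_sumr mulr_suml -sumrB.
  apply: eq_bigr => s _.
  rewrite -scalerAr -scalerAl -scalerBr comm_prod -scaler_sumr; congr (_ *: _).
  rewrite [in RHS](reindex_inj (@perm_inj _ s)) /=; apply: eq_bigr => j _.
  apply: eq_bigr => i _; by rewrite /a' (inj_eq (@perm_inj _ s)).
apply: (big_ind (lspan (star_image inv kind c))) => //.
- exact: lspan0.
- by move=> ? ? ? ?; apply: lspanD.
move=> m _; apply: lspan1; exists (a' m); split => // i.
rewrite /a'; case: (i == m); move: (Ha i); case: (kind i); rewrite /Defs.is_sym /Defs.is_skew => //;
  [exact: Hs | exact: Hk].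
Qed.
End Img.
Section Entries.
Variable F : fieldType.
Lemma mk00 (a b c d : F) : mk a b c d i0 i0 = a. Proof. by rewrite mxE. Qed.
Lemma mk01 (a b c d : F) : mk a b c d i0 i1 = b. Proof. by rewrite mxE. Qed.
Lemma mk10 (a b c d : F) : mk a b c d i1 i0 = c. Proof. by rewrite mxE. Qed.
Lemma mk11 (a b c d : F) : mk a b c d i1 i1 = d. Proof. by rewrite mxE. Qed.
End Entries.

Ltac crd1 y := rewrite (mkE y); move: (y i0 i0) (y i0 i1) (y i1 i0) (y i1 i1) => ? ? ? ?.
Tactic Notation "crd" constr(y) ident(a) ident(b) ident(c) ident(d) := rewrite (mkE y); move: (y i0 i0) (y i0 i1) (y i1 i0) (y i1 i1) => a b c d.
Ltac mksimp := rewrite ?(mk_one, mk_zero, mk_scalar);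
  rewrite ?(mk_mul, mk_sub, mk_add, mk_opp, mk_scale, mk_tr, mk_symp, mk00, mk01, mk10, mk11).

Section Symp.
Variable F : fieldType.
Local Notation M := 'M[F]_2.
Definition E12 : M := mk 0 1 0 0.
Definition E21 : M := mk 0 0 1 0.
Definition Pw : M := mk 0 1 1 0.
Definition Uu : M := mk 1 1 0 1.
Definition Ui : M := mk 1 (-1) 0 1.
Definition Hh : M := mk 1 0 0 (-1).

Lemma symp_der (y : M) : symp (E12 * y - y * E12) = E12 * symp y - symp y * E12.
Proof. crd1 y; rewrite /E12; mksimp; congr mk; ring. Qed.
Lemma symp_P (y : M) : symp (Pw * y * Pw) = Pw * symp y * Pw.
Proof. crd1 y; rewrite /Pw; mksimp; congr mk; ring. Qed.
Lemma symp_U (y : M) : symp (Uu * y * Ui) = Uu * symp y * Ui.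
Proof. crd1 y; rewrite /Uu /Ui; mksimp; congr mk; ring. Qed.
Lemma PP : Pw * Pw = 1. Proof. rewrite /Pw; mksimp; congr mk; ring. Qed.
Lemma UUi : Uu * Ui = 1. Proof. rewrite /Uu /Ui; mksimp; congr mk; ring. Qed.
Lemma UiU : Ui * Uu = 1. Proof. rewrite /Uu /Ui; mksimp; congr mk; ring. Qed.
End Symp.
Arguments E12 {F}. Arguments E21 {F}. Arguments Pw {F}. Arguments Uu {F}. Arguments Ui {F}. Arguments Hh {F}.
From Stdlib Require Import Classical.
Section SympClass.
Variable F : fieldType.
Local Notation M := 'M[F]_2.
Variable V : M -> Prop.
Hypothesis V0 : V 0.
Hypothesis VD : forall x y, V x -> V y -> V (x + y).
Hypothesis VZ : forall a x, V x -> V (a *: x).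
Hypothesis VE : forall x, V x -> V (E12 * x - x * E12).
Hypothesis VP : forall x, V x -> V (Pw * x * Pw).
Hypothesis VU : forall x, V x -> V (Uu * x * Ui).

Lemma VB x y : V x -> V y -> V (x - y).
Proof. by move=> Vx Vy; apply: VD => //; rewrite -scaleN1r; apply: VZ. Qed.

Lemma c12 x : V x -> V (x i1 i0 *: E12).
Proof.
move=> Vx; have -> : x i1 i0 *: E12 = (E12 * x - x * E12) - (Uu * x * Ui - x).
  by crd1 x; rewrite /E12 /Uu /Ui; mksimp; congr mk; ring.
by apply: VB; [apply: VE | apply: VB => //; apply: VU].
Qed.

Lemma E12V x : V x -> ~ (x i0 i1 = 0 /\ x i1 i0 = 0 /\ x i0 i0 = x i1 i1) -> V E12.
Proof.
move=> Vx Hns; have Vc := c12 Vx; have VPc := c12 (VP Vx); have VEx := VE Vx.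
move: Vx Vc VPc VEx Hns; crd x a b c d; rewrite !(mk00, mk01, mk10, mk11).
move=> Vx Vc VPc VEx Hns.
case: (eqVneq c 0) => Hc.
  case: (eqVneq b 0) => Hb.
    subst b c; have Hda : d - a != 0.
      by rewrite subr_eq0; apply/eqP => Hda; apply: Hns; rewrite Hda.
    have -> : E12 = (d - a)^-1 *: (E12 * mk a 0 0 d - mk a 0 0 d * E12).
      by rewrite /E12; mksimp; congr mk; field.
    exact: VZ VEx.
  have E : (Pw * mk a b c d * Pw) i1 i0 = b by rewrite /Pw; mksimp; ring.
  rewrite E in VPc.
  have -> : E12 = b^-1 *: (b *: E12) by rewrite scalerA mulVf // scale1r.
  exact: VZ VPc.
have -> : E12 = c^-1 *: (c *: E12) by rewrite scalerA mulVf // scale1r.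
exact: VZ Vc.
Qed.

Lemma slV : V E12 -> forall x : M, x i0 i0 + x i1 i1 = 0 -> V x.
Proof.
move=> V12; have V21 : V E21.
  have -> : E21 = Pw * E12 * Pw :> M by rewrite /E21 /Pw /E12; mksimp; congr mk; ring.
  exact: VP.
have VH : V Hh.
  have -> : Hh = E12 * E21 - E21 * E12 :> M by rewrite /E21 /Hh /E12; mksimp; congr mk; ring.
  exact: VE.
move=> x; crd x a b c d; rewrite mk00 mk11 => /addr0_eq <-.
have -> : mk a b c (- a) = a *: Hh + b *: E12 + c *: E21 :> M.
  by rewrite /E21 /Hh /E12; mksimp; congr mk; ring.
by apply: VD; [apply: VD|]; apply: VZ.
Qed.

Lemma symp_class : span_in_list (@symp F) V.
Proof.
have [[y [Vy Hy]]|NS] := classic (exists x, V x /\ ~ (x i0 i1 = 0 /\ x i1 i0 = 0 /\ x i0 i0 = x i1 i1)).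
  have V12 := E12V Vy Hy.
  have [[z [Vz Hz]]|NT] := classic (exists x, V x /\ x i0 i0 + x i1 i1 <> 0).
    do 7 right; move=> x; split => // _.
    pose t := (x i0 i0 + x i1 i1) / (z i0 i0 + z i1 i1).
    have -> : x = t *: z + (x - t *: z) by rewrite addrC subrK.
    apply: VD; first exact: VZ.
    apply: slV => //; rewrite !mxE /t; field.
    by apply/eqP.
  right; right; left; move=> x; split.
    move=> Vx; have Htr : x i0 i0 + x i1 i1 = 0.
      by apply: NNPP => H; apply: NT; exists x.
    move: Htr; rewrite /Defs.is_skew; crd x a b c d; rewrite mk00 mk11 => /addr0_eq <-.
    by mksimp; rewrite opprK.
  rewrite /Defs.is_skew => Hs; apply: slV => //; move: Hs; crd x a b c d; mksimp.
  by move=> /mk_inj [-> _ _ _]; rewrite subrr.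
have NS' : forall x, V x -> x = (x i0 i0)%:M.
  move=> x Vx; have : x i0 i1 = 0 /\ x i1 i0 = 0 /\ x i0 i0 = x i1 i1.
    by apply: NNPP => H; apply: NS; exists x.
  by crd x a b c d; mksimp => [[-> [-> <-]]].
have [[z [Vz Hz]]|NZ] := classic (exists x, V x /\ x <> 0).
  right; left; move=> x; split.
    by move=> Vx; exists (x i0 i0); apply: NS'.
  move=> [s ->]; have Ez := NS' z Vz.
  have Hz0 : z i0 i0 != 0 by apply/eqP => H; apply: Hz; rewrite Ez H mk_scalar -mk_zero.
  have -> : s%:M = (s / z i0 i0) *: z :> M.
    move: (z i0 i0) Ez Hz0 => t Ez Ht; rewrite Ez mk_scalar mk_scalar mk_scale.
    by congr mk; field.
  exact: VZ.
left; move=> x; split; last by move=> ->.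
by move=> Vx; apply: NNPP => H; apply: NZ; exists x.
Qed.
End SympClass.
Section Trans.
Variable R : realType.
Local Notation M := 'M[R]_2.
Definition Jm : M := mk 0 1 (-1) 0.
Lemma tr_der (y : M) : (Jm * y - y * Jm)^T = Jm * y^T - y^T * Jm.
Proof. crd1 y; rewrite /Jm; mksimp; congr mk; ring. Qed.
Lemma tr_H (y : M) : (Hh * y * Hh)^T = Hh * y^T * Hh.
Proof. crd1 y; rewrite /Hh; mksimp; congr mk; ring. Qed.
Lemma HH : Hh * Hh = 1 :> M. Proof. rewrite /Hh; mksimp; congr mk; ring. Qed.

Definition T (bI bJ bIm : bool) (x : M) : Prop :=
  (if bI then True else x i0 i0 + x i1 i1 = 0) /\
  (if bJ then True else x i0 i1 = x i1 i0) /\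
  (if bIm then True else x i0 i0 = x i1 i1 /\ x i0 i1 + x i1 i0 = 0).

Variable V : M -> Prop.
Hypothesis V0 : V 0.
Hypothesis VD : forall x y, V x -> V y -> V (x + y).
Hypothesis VZ : forall a x, V x -> V (a *: x).
Hypothesis VJ : forall x, V x -> V (Jm * x - x * Jm).
Hypothesis VH : forall x, V x -> V (Hh * x * Hh).

Lemma TVB x y : V x -> V y -> V (x - y).
Proof. by move=> Vx Vy; apply: VD => //; rewrite -scaleN1r; apply: VZ. Qed.

Lemma LI x : V x -> x i0 i0 + x i1 i1 <> 0 -> V 1.
Proof.
move=> Vx Hx; pose w := x + (1/4) *: (Jm * (Jm * x - x * Jm) - (Jm * x - x * Jm) * Jm).
have Vw : V w by apply: VD => //; apply: VZ; apply: VJ; apply: VJ.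
have -> : 1 = (x i0 i0 + x i1 i1)^-1 *: (w + Hh * w * Hh).
  rewrite /w /Jm /Hh; move: Hx; crd x a b c d; mksimp => H.
  by congr mk; field; apply/eqP.
exact: (VZ _ (VD Vw (VH Vw))).
Qed.

Lemma LJ x : V x -> x i0 i1 <> x i1 i0 -> V Jm.
Proof.
move=> Vx Hx; pose w := x + (1/4) *: (Jm * (Jm * x - x * Jm) - (Jm * x - x * Jm) * Jm).
have Vw : V w by apply: VD => //; apply: VZ; apply: VJ; apply: VJ.
have -> : Jm = (x i0 i1 - x i1 i0)^-1 *: (w - Hh * w * Hh).
  rewrite /w /Jm /Hh; move: Hx; crd x a b c d; mksimp => H.
  have H' : b - c != 0 by rewrite subr_eq0; apply/eqP.
  by congr mk; field.
exact: (VZ _ (TVB Vw (VH Vw))).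
Qed.

Lemma sq_nz (p q : R) : (p != 0) || (q != 0) -> p ^+ 2 + q ^+ 2 != 0.
Proof.
move=> H; rewrite paddr_eq0 ?sqr_ge0 // !sqrf_eq0; apply/negP => /andP [/eqP Hp /eqP Hq].
by move: H; rewrite Hp Hq eqxx.
Qed.

Lemma LIm x : V x -> x i0 i0 <> x i1 i1 \/ x i0 i1 + x i1 i0 <> 0 -> V Hh /\ V Pw.
Proof.
move=> Vx Hx; pose y := Jm * x - x * Jm; pose z := Jm * y - y * Jm.
have Vy : V y by apply: VJ.
have Vz : V z by apply: VJ.
have Hn : (x i0 i0 - x i1 i1 != 0) || (x i0 i1 + x i1 i0 != 0).
  case: Hx => H; apply/orP; [left|right]; rewrite ?subr_eq0; exact/eqP.
have Hs := sq_nz Hn.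
split.
  have -> : Hh = ((x i0 i0 - x i1 i1) ^+ 2 + (x i0 i1 + x i1 i0) ^+ 2)^-1 *:
      ((- (x i0 i0 - x i1 i1) / 2) *: z + (x i0 i1 + x i1 i0) *: y).
    rewrite /z /y /Jm /Hh; move: Hs; crd x a b c d; mksimp => H.
    by congr mk; field.
  exact: VZ (VD (VZ _ Vz) (VZ _ Vy)).
have -> : Pw = ((x i0 i0 - x i1 i1) ^+ 2 + (x i0 i1 + x i1 i0) ^+ 2)^-1 *:
    ((- (x i0 i1 + x i1 i0) / 2) *: z - (x i0 i0 - x i1 i1) *: y).
  rewrite /z /y /Jm /Pw; move: Hs; crd x a b c d; mksimp => H.
  by congr mk; field.
exact: VZ (TVB (VZ _ Vz) (VZ _ Vy)).
Qed.

Lemma charT (bI bJ bIm : bool) :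
  (bI -> V 1) -> (~~ bI -> forall x, V x -> x i0 i0 + x i1 i1 = 0) ->
  (bJ -> V Jm) -> (~~ bJ -> forall x, V x -> x i0 i1 = x i1 i0) ->
  (bIm -> V Hh /\ V Pw) ->
  (~~ bIm -> forall x, V x -> x i0 i0 = x i1 i1 /\ x i0 i1 + x i1 i0 = 0) ->
  same_set V (T bI bJ bIm).
Proof.
move=> hI nI hJ nJ hIm nIm x; split.
  move=> Vx; rewrite /T; split; [|split].
  - by case: bI hI nI => // _ /(_ isT x Vx).
  - by case: bJ hJ nJ => // _ /(_ isT x Vx).
  - by case: bIm hIm nIm => // _ /(_ isT x Vx).
rewrite /T => -[TI [TJ TIm]]; clear nI nJ nIm.
have -> : x = ((x i0 i0 + x i1 i1) / 2) *: 1 + ((x i0 i1 - x i1 i0) / 2) *: Jm +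
   (((x i0 i0 - x i1 i1) / 2) *: Hh + ((x i0 i1 + x i1 i0) / 2) *: Pw).
  rewrite /Jm /Hh /Pw; crd x a b c d; mksimp; by congr mk; field.
apply: VD; [apply: VD|apply: VD].
- case: bI hI TI => [hI _|_ ->]; first exact: VZ (hI isT).
  by rewrite mul0r scale0r.
- case: bJ hJ TJ => [hJ _|_ ->]; first exact: VZ (hJ isT).
  by rewrite subrr mul0r scale0r.
- case: bIm hIm TIm => [hIm _|_ [-> _]]; first exact: VZ (proj1 (hIm isT)).
  by rewrite subrr mul0r scale0r.
- case: bIm hIm TIm => [hIm _|_ [_ ->]]; first exact: VZ (proj2 (hIm isT)).
  by rewrite mul0r scale0r.
Qed.
End Trans.
Arguments Jm {R}.

Section TransList.
Variable R : realType.
Local Notation M := 'M[R]_2.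

Lemma T0 b1 b2 b3 : T b1 b2 b3 (0 : M).
Proof. rewrite /T mk_zero; mksimp; case: b1; case: b2; case: b3 => /=; intuition lra. Qed.
Lemma TD b1 b2 b3 (x y : M) : T b1 b2 b3 x -> T b1 b2 b3 y -> T b1 b2 b3 (x + y).
Proof.
crd x a b c d; crd y e f g h; rewrite /T; mksimp.
case: b1; case: b2; case: b3 => /=; intuition lra.
Qed.
Lemma TZ b1 b2 b3 k (x : M) : T b1 b2 b3 x -> T b1 b2 b3 (k *: x).
Proof.
crd x a b c d; rewrite /T; mksimp.
case: b1; case: b2; case: b3 => /=; intuition nra.
Qed.

Lemma ss_trans (A B C : M -> Prop) : same_set A B -> same_set B C -> same_set A C.
Proof. by move=> h1 h2 x; split => H; [apply/h2/h1 | apply/h1/h2]. Qed.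

Lemma S1 : same_set (T false false false) (fun x : M => x = 0).
Proof.
move=> x; rewrite /T; split; last by move=> ->; exact: (T0 false false false).
crd x a b c d; mksimp => -[H1 [H2 [H3 H4]]]; congr mk; lra.
Qed.

Lemma S2 : same_set (T true false false) (@is_central R).
Proof.
move=> x; rewrite /T /Defs.is_central; split.
  crd x a b c d; mksimp => -[_ [H2 [H3 H4]]]; exists a; rewrite mk_scalar; congr mk; lra.
by move=> [s ->]; rewrite mk_scalar; mksimp; intuition lra.
Qed.

Lemma S3 : same_set (T false true false) (Defs.is_skew (@trmx R 2 2)).
Proof.
move=> x; rewrite /T /Defs.is_skew; crd x a b c d; mksimp; split.
  move=> [H1 [_ [H3 H4]]]; congr mk; lra.
by move=> /mk_inj [H1 H2 H3 H4]; intuition lra.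
Qed.

Lemma S5 : same_set (T true false true) (Defs.is_sym (@trmx R 2 2)).
Proof.
move=> x; rewrite /T /Defs.is_sym; crd x a b c d; mksimp; split.
  move=> [_ [H2 _]]; congr mk; lra.
by move=> /mk_inj [H1 H2 H3 H4]; intuition lra.
Qed.

Lemma S6 : same_set (T true true false)
  (fun x : M => exists z w, is_central z /\ Defs.is_skew (@trmx R 2 2) w /\ x = z + w).
Proof.
move=> x; rewrite /T /Defs.is_skew /Defs.is_central; split.
  crd x a b c d; mksimp => -[_ [_ [H3 H4]]].
  exists (a%:M), (mk 0 b c 0); split; first by exists a.
  split; first by mksimp; congr mk; lra.
  by rewrite mk_scalar; mksimp; congr mk; lra.
move=> [z [w [[s ->] [Hw ->]]]]; move: Hw; crd w e f g h; rewrite mk_scalar; mksimp.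
by move=> /mk_inj [H1 H2 H3 H4]; intuition lra.
Qed.

Lemma S8 : same_set (T true true true) (fun _ : M => True).
Proof. by move=> x; rewrite /T. Qed.

Definition E11 : M := mk 1 0 0 0.

Lemma S7 : same_set (T false true true) (comm_span (fun _ : M => True) (fun _ => True)).
Proof.
move=> x; split.
  rewrite /T; have C : forall u v : M, comm_span (fun _ => True) (fun _ => True) (u * v - v * u).
    by move=> u v; apply: lspan1; exists u, v.
  move=> [H _].
  have -> : x = x i0 i0 *: (E12 * E21 - E21 * E12) + x i0 i1 *: (E11 * E12 - E12 * E11) +
                x i1 i0 *: (E21 * E11 - E11 * E21).
    move: H; rewrite /E12 /E21 /E11; crd x a b c d; mksimp => H; congr mk; lra.
  by rewrite /comm_span; apply: lspanD; [apply: lspanD|]; apply: lspanZ; apply: C.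
apply: lspan_sub; [exact: T0 | exact: TD | exact: TZ|].
move=> _ [u [v [_ [_ ->]]]]; rewrite /T; crd u a b c d; crd v e f g h; mksimp.
by split => //; ring.
Qed.

Lemma S4 : same_set (T false false true) (comm_span (Defs.is_sym (@trmx R 2 2)) (Defs.is_skew (@trmx R 2 2))).
Proof.
move=> x; split.
  rewrite /T; move=> [H1 [H2 _]].
  have C : forall u v : M, u^T = u -> v^T = - v ->
      comm_span (Defs.is_sym (@trmx R 2 2)) (Defs.is_skew (@trmx R 2 2)) (u * v - v * u).
    by move=> u v Hu Hv; apply: lspan1; exists u, v.
  have -> : x = (- x i0 i0 / 2) *: (Pw * Jm - Jm * Pw) + (x i0 i1 / 2) *: (Hh * Jm - Jm * Hh).
    move: H1 H2; rewrite /Pw /Jm /Hh; crd x a b c d; mksimp => H1 H2.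
    have Hd : d = - a by lra.
    by subst d c; congr mk; field.
  rewrite /comm_span; apply: lspanD; apply: lspanZ; apply: C; rewrite /Pw /Jm /Hh; mksimp; congr mk; lra.
apply: lspan_sub; [exact: T0 | exact: TD | exact: TZ|].
move=> _ [u [v [Hu [Hv ->]]]]; move: Hu Hv; rewrite /T /Defs.is_sym /Defs.is_skew.
crd u a b c d; crd v e f g h; mksimp.
move=> /mk_inj [_ Hbc _ _] /mk_inj [He Hf Hg Hh'].
have e0 : e = 0 by lra.
have h0 : h = 0 by lra.
have g0 : g = - f by lra.
subst e h g; rewrite Hbc.
by split; [ring | split => //; ring].
Qed.
End TransList.


Lemma trans_class (R : realType) (V : 'M[R]_2 -> Prop) :
  V 0 -> (forall x y, V x -> V y -> V (x + y)) -> (forall a x, V x -> V (a *: x)) ->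
  (forall x, V x -> V (Jm * x - x * Jm)) -> (forall x, V x -> V (Hh * x * Hh)) ->
  span_in_list (@trmx R 2 2) V.
Proof.
move=> V0 VD VZ VJ VH.
have [bI [hI nI]] : exists bI : bool, (bI -> V 1) /\
    (~~ bI -> forall x, V x -> x i0 i0 + x i1 i1 = 0).
  case: (classic (exists x, V x /\ x i0 i0 + x i1 i1 <> 0)) => [[x [Vx Hx]]|N].
    by exists true; split => // _; exact (LI VD VZ VJ VH Vx Hx).
  by exists false; split => // _ x Vx; apply: NNPP => H; apply: N; exists x.
have [bJ [hJ nJ]] : exists bJ : bool, (bJ -> V Jm) /\
    (~~ bJ -> forall x, V x -> x i0 i1 = x i1 i0).
  case: (classic (exists x, V x /\ x i0 i1 <> x i1 i0)) => [[x [Vx Hx]]|N].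
    by exists true; split => // _; exact (LJ VD VZ VJ VH Vx Hx).
  by exists false; split => // _ x Vx; apply: NNPP => H; apply: N; exists x.
have [bIm [hIm nIm]] : exists bIm : bool, (bIm -> V Hh /\ V Pw) /\
    (~~ bIm -> forall x, V x -> x i0 i0 = x i1 i1 /\ x i0 i1 + x i1 i0 = 0).
  case: (classic (exists x, V x /\ (x i0 i0 <> x i1 i1 \/ x i0 i1 + x i1 i0 <> 0))) =>
      [[x [Vx Hx]]|N].
    by exists true; split => // _; exact (LIm VD VZ VJ Vx Hx).
  exists false; split => // _ x Vx; split; apply: NNPP => H; apply: N; exists x; split => //.
    by left.
  by right.
have C := charT V0 VD VZ hI nI hJ nJ hIm nIm.
case: bI bJ bIm {hI nI hJ nJ hIm nIm} C => [] [] [] C.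
- by do 7 right; exact: (ss_trans C (@S8 R)).
- by do 5 right; left; exact: (ss_trans C (@S6 R)).
- by do 4 right; left; exact: (ss_trans C (@S5 R)).
- by right; left; exact: (ss_trans C (@S2 R)).
- by do 6 right; left; exact: (ss_trans C (@S7 R)).
- by right; right; left; exact: (ss_trans C (@S3 R)).
- by do 3 right; left; exact: (ss_trans C (@S4 R)).
- by left; exact: (ss_trans C (@S1 R)).
Qed.

Theorem mainTheorem3 :
  (forall (R : realType) (k : nat) (kind : 'I_k -> bool) (c : {perm 'I_k} -> R),
     span_in_list (@trmx R 2 2) (lspan (star_image (@trmx R 2 2) kind c))) /\
  (forall (F : fieldType) (k : nat) (kind : 'I_k -> bool) (c : {perm 'I_k} -> F),
     span_in_list (@symp F) (lspan (star_image (@symp F) kind c))).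
Proof.
split.
  move=> R k kind c; apply: trans_class.
  - exact: lspan0.
  - by move=> x y; apply: lspanD.
  - by move=> a x; apply: lspanZ.
  - move=> x; apply: V_der => y Hy; rewrite tr_der Hy //.
    by rewrite mulrN mulNr opprK opprB addrC.
  - move=> x; apply: V_conj; [exact: HH | exact: HH | exact: tr_H].
move=> F k kind c; apply: symp_class.
- exact: lspan0.
- by move=> x y; apply: lspanD.
- by move=> a x; apply: lspanZ.
- move=> x; apply: V_der => y Hy; rewrite symp_der Hy //.
  by rewrite mulrN mulNr opprK opprB addrC.
- move=> x; apply: V_conj; [exact: PP | exact: PP | exact: symp_P].
- move=> x; apply: V_conj; [exact: UiU | exact: UUi | exact: symp_U].
Qed.
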